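(* Let $q\equiv 1\pmod 4$ be a prime power. If $\psi$ is a bijection from the vertex set of a triangle $\{x,y,z\}$ of $Tr(SP_q)$ to the vertex set of a triangle $\{x',y',z'\}$ of $Tr(SP_q)$ that maps each of the three edges to an edge of the same sign, then $\psi$ extends to a (sign-preserving) automorphism of $Tr(SP_q)$.
   Context: A signified graph is a simple graph with each edge labelled positive or negative; a triangle is a set of three pairwise adjacent vertices; an automorphism is a vertex bijection mapping edges to edges of the same sign and non-edges to non-edges. Let $q\equiv 1\pmod 4$ be a prime power; for $x\in\mathbb{F}_q^*$ let $\mathrm{sq}(x)=+1$ if $x$ is a square and $-1$ otherwise. The Tromp signified Paley graph $Tr(SP_q)$ has vertex set $\{u_i : u\in\mathbb{F}_q\cup\{\infty\},\ i\in\{0,1\}\}$. For $u\ne v$ in $\mathbb{F}_q$, $u_iv_j$ is an edge of sign $\mathrm{sq}(u-v)(-1)^{i+j}$; for $v\in\mathbb{F}_q$, $\infty_iv_j$ is an edge of sign $(-1)^{i+j}$; there are no other edges. *)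

(* Defs.v *)
From HB Require Import structures.
From mathcomp Require Import all_boot all_order all_algebra all_field.
Set Implicit Arguments. Unset Strict Implicit. Unset Printing Implicit Defensive.
Import GRing.Theory.
Local Open Scope ring_scope.

(* Vertices of Tr(SP_q): u_i with u in F_q ∪ {∞} (None = ∞), i in {0,1}
   (false = 0, true = 1). *)
Definition trv (F : finFieldType) : finType := (option F * bool)%type.

(* sq x = +1 (true) iff x is a (nonzero) square; used only for x <> 0. *)
Definition is_sq (F : finFieldType) (x : F) : bool := [exists y : F, y * y == x].

(* (-1)^(i+j) = +1 iff i = j. *)
Definition par_pos (i j : bool) : bool := i == j.

Definition tr_adj (F : finFieldType) (a b : trv F) : bool :=
  match a.1, b.1 with
  | Some u, Some v => u != v
  | Some _, None => true
  | None, Some _ => true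
  | None, None => false
  end.

(* sign of the pair (meaningful for edges): true = positive, false = negative.
   For u,v in F: sq(u-v)(-1)^(i+j);  with ∞: (-1)^(i+j). *)
Definition tr_pos (F : finFieldType) (a b : trv F) : bool :=
  match a.1, b.1 with
  | Some u, Some v => is_sq (u - v) == par_pos a.2 b.2
  | _, _ => par_pos a.2 b.2
  end.

Definition tr_triangle (F : finFieldType) (x y z : trv F) : Prop :=
  [/\ tr_adj x y, tr_adj y z & tr_adj x z].

Definition tr_aut (F : finFieldType) (f : trv F -> trv F) : Prop :=
  bijective f /\
  (forall a b, tr_adj (f a) (f b) = tr_adj a b) /\
  (forall a b, tr_adj a b -> tr_pos (f a) (f b) = tr_pos a b).

(* Main.v *)
Require Import Defs.
From HB Require Import structures.
From mathcomp Require Import all_boot all_order all_algebra all_field.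
From mathcomp Require Import all_fingroup all_solvable.
From mathcomp Require Import ring.
Set Implicit Arguments. Unset Strict Implicit. Unset Printing Implicit Defensive.
Import GRing.Theory.
Local Open Scope ring_scope.

Section Quad.
Variable F : finFieldType.
Hypothesis hq : (#|F| %% 4 = 1)%N.

Lemma is_sqP (x : F) : reflect (exists y, y * y = x) (is_sq x).
Proof.
apply: (iffP existsP) => [[y /eqP]|[y]] <-; by exists y.
Qed.

Let k := (#|F| %/ 4)%N.
Lemma cardF : #|F| = (4 * k).+1.
Proof. by rewrite /k {1}(divn_eq #|F| 4) hq addn1 mulnC. Qed.
Lemma k_gt0 : (0 < k)%N.
Proof.
have := finNzRing_gt1 F; rewrite cardF; case: k => //.
Qed.

Lemma expF1 (x : F) : x != 0 -> x ^+ (4 * k) = 1.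
Proof.
move=> nz; apply: (mulfI nz); by rewrite mulr1 -exprS -cardF expf_card.
Qed.

Lemma ex_prim : exists z : F, (4 * k).-primitive_root z.
Proof.
suff /hasP[z _ pz] : has (4 * k).-primitive_root [seq x <- enum F | x != 0] by exists z.
apply: has_prim_root.
- by rewrite muln_gt0 k_gt0.
- by apply/allP => x; rewrite mem_filter unity_rootE => /andP[nz _]; rewrite expF1.
- by rewrite filter_uniq ?enum_uniq.
- rewrite size_filter.
  have := cardC1 (0 : F); rewrite cardF /=. move=> <-.
  by rewrite cardE -size_filter /enum_mem /= filter_predT.
Qed.

Lemma sq_euler (x : F) : x != 0 -> is_sq x = (x ^+ (2 * k) == 1).
Proof.
move=> nz; apply/is_sqP/eqP => [[y hy]|].
  have nzy : y != 0 by apply: contraNneq nz => y0; rewrite -hy y0 mul0r.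
  by rewrite -hy -expr2 -exprM mulnA expF1.
have [z pz] := ex_prim.
move=> h; have [[i _] /= hi] := prim_rootP pz (expF1 nz).
move: h; rewrite hi -exprM => /eqP; rewrite -(prim_order_dvd pz).
have -> : (4 * k = 2 * (2 * k))%N by rewrite mulnA.
rewrite dvdn_pmul2r; last by rewrite muln_gt0 k_gt0.
move=> /dvdnP[j ->]; exists (z ^+ j); by rewrite -exprD addnn -mul2n mulnC.
Qed.

Lemma pm1 (x : F) : x != 0 -> x ^+ (2 * k) = 1 \/ x ^+ (2 * k) = -1.
Proof.
move=> nz; have : (x ^+ (2 * k)) ^+ 2 == 1 by rewrite -exprM mulnC mulnA expF1.
by rewrite sqrf_eq1 => /orP[] /eqP; [left|right].
Qed.

Lemma one_neq_m1 : (1 : F) != -1.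
Proof.
have [z pz] := ex_prim.
have nz : z != 0.
  apply/eqP => z0; have := prim_expr_order pz; rewrite z0 expr0n muln_eq0 /=.
  by rewrite (negbTE (lt0n_neq0 k_gt0)) => /eqP; rewrite eq_sym oner_eq0.
have : z ^+ (2 * k) != 1.
  rewrite -(prim_order_dvd pz) -[4%N]/(2 * 2)%N -mulnA.
  rewrite -{2}[(2 * k)%N]mul1n dvdn_pmul2r ?muln_gt0 ?k_gt0 //.
case: (pm1 nz) => ->; [by rewrite eqxx | by rewrite eq_sym].
Qed.

Lemma is_sqM (a b : F) : a != 0 -> b != 0 -> is_sq (a * b) = (is_sq a == is_sq b).
Proof.
move=> na nb; rewrite !sq_euler ?mulf_neq0 // exprMn.
have h := one_neq_m1; have h' : (-1 : F) != 1 by rewrite eq_sym.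
case: (pm1 na) => ->; case: (pm1 nb) => ->;
  rewrite ?mulr1 ?mul1r ?mulrNN ?mulr1 ?eqxx ?(negbTE h') //.
Qed.

Lemma ex_i : exists i : F, i * i = -1.
Proof.
apply/is_sqP; rewrite sq_euler ?oppr_eq0 ?oner_eq0 //.
by rewrite exprM sqrrN expr1n expr1n.
Qed.

Lemma is_sqN (x : F) : is_sq (- x) = is_sq x.
Proof.
have [i hi] := ex_i.
apply/is_sqP/is_sqP => [[y hy]|[y hy]].
  exists (i * y); by rewrite mulrACA hi hy mulN1r opprK.
exists (i * y); by rewrite mulrACA hi hy mulN1r.
Qed.

Lemma is_sqV (x : F) : is_sq (x ^-1) = is_sq x.
Proof.
apply/is_sqP/is_sqP => [[y hy]|[y hy]].
  exists (y^-1); by rewrite -invfM hy invrK.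
exists (y^-1); by rewrite -invfM hy.
Qed.
End Quad.

Section Graph.
Variable F : finFieldType.
Hypothesis hq : (#|F| %% 4 = 1)%N.

Definition sgn (u v : option F) : bool :=
  match u, v with Some u, Some v => is_sq (u - v) | _, _ => true end.

Lemma tr_posE (a b : trv F) : tr_pos a b = (sgn a.1 b.1 == (a.2 == b.2)).
Proof. by case: a b => [[u|] i] [[v|] j]. Qed.

Lemma tr_adjE (a b : trv F) : tr_adj a b = (a.1 != b.1).
Proof. by case: a b => [[u|] i] [[v|] j]. Qed.

Definition mk (phi : option F -> option F) (c : option F -> bool) (a : trv F) : trv F :=
  (phi a.1, a.2 (+) c a.1).

Lemma mk_aut phi psi c : cancel phi psi -> cancel psi phi ->
  (forall u v, u != v -> sgn (phi u) (phi v) = sgn u v (+) (c u != c v)) ->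
  tr_aut (mk phi c).
Proof.
move=> h1 h2 H; split; [|split].
- exists (fun a => (psi a.1, a.2 (+) c (psi a.1))) => [[u i]|[u i]] /=;
    rewrite /mk /= ?h1 ?h2 -addbA addbb addbF //.
- by move=> a b; rewrite !tr_adjE /= (inj_eq (can_inj h1)).
- move=> [u i] [v j]; rewrite tr_adjE /= => uv; rewrite !tr_posE /= H //.
  by case: (sgn u v) (c u) (c v) i j => [] [] [] [] [].
Qed.

Lemma aut_id : tr_aut (@id (trv F)).
Proof. split; [exact: (@Bijective _ _ id id)|split] => //. Qed.

Lemma aut_comp (f g : trv F -> trv F) : tr_aut f -> tr_aut g -> tr_aut (f \o g).
Proof.
move=> [bf [af pf]] [bg [ag pg]]; split; [exact: bij_comp|split] => a b /=.
  by rewrite af ag.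
by move=> ab; rewrite pf ?ag // pg.
Qed.

Lemma aut_inv (f : trv F -> trv F) : tr_aut f -> exists g, tr_aut g /\ cancel f g.
Proof.
move=> [[g fg gf] [af pf]]; exists g; split=> //.
have ag : forall a b, tr_adj (g a) (g b) = tr_adj a b.
  by move=> a b; rewrite -[in RHS](gf a) -[in RHS](gf b) af.
split; [exact: (Bijective gf fg)|split] => // a b ab.
by rewrite -[in RHS](gf a) -[in RHS](gf b) pf // ag.
Qed.

Lemma aut_tri (f : trv F -> trv F) x y z : tr_aut f -> tr_triangle x y z -> tr_triangle (f x) (f y) (f z).
Proof. by move=> [_ [af _]] [h1 h2 h3]; split; rewrite af. Qed.

Lemma aut_pos (f : trv F -> trv F) a b : tr_aut f -> tr_adj a b -> tr_pos (f a) (f b) = tr_pos a b.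
Proof. by move=> [_ [_ pf]] /pf. Qed.

Definition trans (a : F) := mk (omap (fun u => u + a)) (fun _ => false).
Lemma trans_aut a : tr_aut (trans a).
Proof.
apply: (@mk_aut _ (omap (fun u => u - a))).
- by case=> //= u; rewrite addrK.
- by case=> //= u; rewrite subrK.
- move=> [u|] [v|] //= _; rewrite addbF; congr is_sq; ring.
Qed.

Definition mulsq (r : F) := mk (omap (fun u => r * r * u)) (fun _ => false).
Lemma mulsq_aut r : r != 0 -> tr_aut (mulsq r).
Proof.
move=> nz; have nz2 : r * r != 0 by rewrite mulf_neq0.
apply: (@mk_aut _ (omap (fun u => (r * r)^-1 * u))).
- by case=> //= u; rewrite mulKf.
- by case=> //= u; rewrite mulVKf.
- move=> [u|] [v|] //= _; rewrite -mulrBr addbF.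
  apply/is_sqP/is_sqP => [[y hy]|[y hy]].
    exists (r^-1 * y); by rewrite mulrACA -invfM hy mulKf.
  exists (r * y); by rewrite mulrACA hy.
Qed.

Definition invphi (u : option F) : option F :=
  match u with Some u => if u == 0 then None else Some (- u^-1) | None => Some 0 end.
Definition invc (u : option F) : bool :=
  match u with Some u => ~~ is_sq u | None => false end.
Definition inv := mk invphi invc.

Lemma is_sq0 : is_sq (0 : F).
Proof. by apply/is_sqP; exists 0; rewrite mul0r. Qed.

Lemma invphiK : involutive invphi.
Proof.
case=> [u|] /=; last by rewrite eqxx.
case: eqP => [->|/eqP nz] //=.
by rewrite oppr_eq0 invr_eq0 (negbTE nz) invrN invrK opprK.
Qed.

Lemma inv_aut : tr_aut inv.
Proof.
apply: (@mk_aut _ invphi); try exact: invphiK.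
move=> [u|] [v|] //= uv.
- case: (eqVneq u 0) => [eu|nu]; case: (eqVneq v 0) => [ev|nv] //=.
  + by rewrite eu ev eqxx in uv.
  + by rewrite eu is_sq0 sub0r (is_sqN hq); case: (is_sq v).
  + by rewrite ev is_sq0 subr0; case: (is_sq u).
  + have -> : - u^-1 - - v^-1 = (u - v) * (u * v)^-1.
      by field; rewrite nu nv.
    have uv' : u - v != 0 by rewrite subr_eq0; apply: contraNneq uv => ->.
    rewrite (is_sqM hq) // ?invr_eq0 ?mulf_neq0 // is_sqV (is_sqM hq) //.
    by case: (is_sq (u - v)) (is_sq u) (is_sq v) => [] [] [].
- case: (eqVneq u 0) => [->|nu] /=; first by rewrite is_sq0.
  by rewrite subr0 (is_sqN hq) is_sqV; case: (is_sq u).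
- case: (eqVneq v 0) => [->|nv] /=; first by rewrite is_sq0.
  by rewrite sub0r opprK is_sqV; case: (is_sq v).
Qed.

Definition flip (b : bool) := mk id (fun _ => b).
Lemma flip_aut b : tr_aut (flip b).
Proof.
apply: (@mk_aut _ id) => // u v _; by rewrite eqxx addbF.
Qed.


Lemma step1 (x : trv F) : exists g, tr_aut g /\ (g x).1 = None.
Proof.
case: x => [[a|] i]; last by exists id; split=> //; exact: aut_id.
exists (inv \o trans (- a)); split; first exact: aut_comp inv_aut (trans_aut _).
by rewrite /= subrr eqxx.
Qed.

Lemma normal_form (x y z : trv F) : tr_triangle x y z ->
  exists g w b c, [/\ tr_aut g, g x = (None, false), g y = (Some 0, b),
                      g z = (Some w, c) & w != 0].
Proof.
move=> T.
have [g1 [a1 e1]] := step1 x.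
have T1 := aut_tri a1 T.
have : (g1 y).1 != None by case: T1; rewrite tr_adjE e1 eq_sym.
case E : (g1 y).1 => [b0|] // _.
pose g2 := trans (- b0).
have a2 : tr_aut g2 := trans_aut _.
pose g3 := flip (g2 (g1 x)).2.
have a3 : tr_aut g3 := flip_aut _.
pose g := g3 \o (g2 \o g1).
have ag : tr_aut g by apply: aut_comp a3 (aut_comp a2 a1).
have gx : g x = (None, false).
  rewrite /g /g3 /g2 /= /mk /=; case: (g1 x) e1 => /= ? ? ->.
  by rewrite /flip /trans /mk /= !addbF addbb.
have gy1 : (g y).1 = Some 0 by rewrite /g /= E /= subrr.
have [_ T2 T3] := aut_tri ag T.
move: T2 T3; rewrite !tr_adjE gx gy1 => nw nn.
case E3 : (g z).1 nw nn => [w|] nw nn //.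
exists g, w, (g y).2, (g z).2; split=> //.
- by rewrite -gy1 -surjective_pairing.
- by rewrite -E3 -surjective_pairing.
- by apply: contraNneq nw => ->.
Qed.

End Graph.

Unset Implicit Arguments.
Theorem mainTheorem7 (F : finFieldType) (hq : (#|F| %% 4 = 1)%N)
  (x y z x' y' z' : trv F) :
  tr_triangle x y z -> tr_triangle x' y' z' ->
  tr_pos x' y' = tr_pos x y -> tr_pos y' z' = tr_pos y z ->
  tr_pos x' z' = tr_pos x z ->
  exists f : trv F -> trv F,
    [/\ tr_aut f, f x = x', f y = y' & f z = z'].
Proof.
move=> T T' pxy pyz pxz.
have [g [w [b [c [ag gx gy gz nw]]]]] := normal_form hq T.
have [g' [w' [b' [c' [ag' gx' gy' gz' nw']]]]] := normal_form hq T'.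
have [gi [agi gK]] := aut_inv ag'.
have [Txy Tyz Txz] := T; have [Txy' Tyz' Txz'] := T'.
move: pxy pyz pxz.
rewrite -(aut_pos ag Txy) -(aut_pos ag Tyz) -(aut_pos ag Txz).
rewrite -(aut_pos ag' Txy') -(aut_pos ag' Tyz') -(aut_pos ag' Txz').
rewrite gx gy gz gx' gy' gz' /tr_pos /= /par_pos.
have eqF : forall p q : bool, (false == p) = (false == q) -> p = q by do 2!case.
move=> /eqF eb; move: eb gy' gz' => -> gy' gz' + /eqF ec; move: ec gz' => -> gz'.
have eqS : forall p q r : bool, (p == r) = (q == r) -> p = q by do 3!case.
move=> /eqS; rewrite !sub0r !(is_sqN hq) => esq.
have : is_sq (w' * w^-1).
  by rewrite (is_sqM hq) ?invr_eq0 // is_sqV esq.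
move/is_sqP => [r hr].
have nr : r != 0.
  apply: contraNneq (mulf_neq0 nw' (invr_neq0 nw)) => r0.
  by rewrite -hr r0 mul0r.
exists (gi \o (mulsq r \o g)); split.
- exact: aut_comp agi (aut_comp (mulsq_aut nr) ag).
- by rewrite /= gx /mulsq /mk /= -gx' gK.
- by rewrite /= gy /mulsq /mk /= mulr0 addbF -gy' gK.
- by rewrite /= gz /mulsq /mk /= hr mulfVK // addbF -gz' gK.
Qed.
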